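(* Let $(E_{-1},E_0,\partial,\rho,S,\circ,\Omega)$ be an $\mathrm{LWX}$ $2$-algebroid over $M$. Let $[\![e_1,e_2]\!]=\frac12(e_1\circ e_2-e_2\circ e_1)$, $J(e_1,e_2,e_3)=[\![[\![e_1,e_2]\!],e_3]\!]+[\![[\![e_2,e_3]\!],e_1]\!]+[\![[\![e_3,e_1]\!],e_2]\!]$ for $e_i\in\Gamma(\mathcal E)$, and define $T:\Gamma(E_0)\times\Gamma(E_0)\times\Gamma(E_{-1})\to C^\infty(M)$ by $$T(e^0_1,e^0_2,e^1)=\tfrac16\big(S(e^0_1,[\![e^0_2,e^1]\!])+S(e^1,[\![e^0_1,e^0_2]\!])+S(e^0_2,[\![e^1,e^0_1]\!])\big).$$ Then for all $e^0,e^0_1,e^0_2,e^0_3\in\Gamma(E_0)$ and $e^1,e^1_1,e^1_2\in\Gamma(E_{-1})$: $$J(e^0_1,e^0_2,e^0_3)=-\partial\Omega(e^0_1,e^0_2,e^0_3),\qquad J(e^0_1,e^0_2,e^1)=\mathcal D T(e^0_1,e^0_2,e^1)-\Omega(e^0_1,e^0_2,\partial e^1),$$ $$T(\partial e^1_1,e^0,e^1_2)=-T(\partial e^1_2,e^0,e^1_1).$$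
   Context: A Leibniz $2$-algebra $(V_{-1},V_0,d,l_2,l_3)$ consists of a complex of real vector spaces $d:V_{-1}\to V_0$, bilinear maps $l_2:V_{-i}\times V_{-j}\to V_{-i-j}$ for $0\le i+j\le 1$, and a trilinear map $l_3:V_0\times V_0\times V_0\to V_{-1}$ such that for all $w,x,y,z\in V_0$, $m,n\in V_{-1}$: (a) $d\,l_2(x,m)=l_2(x,dm)$; (b) $d\,l_2(m,x)=l_2(dm,x)$; (c) $l_2(dm,n)=l_2(m,dn)$; (d) $d\,l_3(x,y,z)=l_2(x,l_2(y,z))-l_2(l_2(x,y),z)-l_2(y,l_2(x,z))$; (e1) $l_3(x,y,dm)=l_2(x,l_2(y,m))-l_2(l_2(x,y),m)-l_2(y,l_2(x,m))$; (e2) $l_3(x,dm,y)=l_2(x,l_2(m,y))-l_2(l_2(x,m),y)-l_2(m,l_2(x,y))$; (e3) $l_3(dm,x,y)=l_2(m,l_2(x,y))-l_2(l_2(m,x),y)-l_2(x,l_2(m,y))$; (f) $l_2(w,l_3(x,y,z))-l_2(x,l_3(w,y,z))+l_2(y,l_3(w,x,z))+l_2(l_3(w,x,y),z)-l_3(l_2(w,x),y,z)-l_3(x,l_2(w,y),z)-l_3(x,y,l_2(w,z))+l_3(w,l_2(x,y),z)+l_3(w,y,l_2(x,z))-l_3(w,x,l_2(y,z))=0$. An $\mathrm{LWX}$ $2$-algebroid $(E_{-1},E_0,\partial,\rho,S,\circ,\Omega)$ over a manifold $M$ consists of vector bundles $E_{-1},E_0$ over $M$ with $\mathcal E=E_{-1}\oplus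 E_0$; a nondegenerate symmetric bilinear form $S$ on $\mathcal E$ for which $E_0$ and $E_{-1}$ are both isotropic; an $\mathbb R$-bilinear operation $\circ$ on $\Gamma(\mathcal E)$ mapping $\Gamma(E_{-i})\times\Gamma(E_{-j})\to\Gamma(E_{-(i+j)})$ for $0\le i+j\le 1$ (and zero on $\Gamma(E_{-1})\times\Gamma(E_{-1})$), skew-symmetric on $\Gamma(E_0)\times\Gamma(E_0)$; an $E_{-1}$-valued $3$-form $\Omega$ on $E_0$; bundle maps $\partial:E_{-1}\to E_0$ and $\rho:E_0\to TM$ ($\rho$ is extended by zero to $E_{-1}$); such that: (i) $(\Gamma(E_{-1}),\Gamma(E_0),\partial,\circ,\Omega)$ is a Leibniz $2$-algebra (with $d=\partial$, $l_2=\circ$, $l_3=\Omega$); (ii) $e\circ e=\frac12\mathcal D S(e,e)$ for all $e\in\Gamma(\mathcal E)$, where $\mathcal D:C^\infty(M)\to\Gamma(E_{-1})$ is defined by $S(\mathcal D f,e^0)=\rho(e^0)(f)$ for all $e^0\in\Gamma(E_0)$; (iii) $S(\partial e^1_1,e^1_2)=S(e^1_1,\partial e^1_2)$ for $e^1_1,e^1_2\in\Gamma(E_{-1})$; (iv) $\rho(e_1)S(e_2,e_3)=S(e_1\circ e_2,e_3)+S(e_2,e_1\circ e_3)$ for all $e_1,e_2,e_3\in\Gamma(\mathcal E)$; (v) $S(\Omega(e^0_1,e^0_2,e^0_3),e^0_4)=-S(e^0_3,\Omega(e^0_1,e^0_2,e^0_4))$ for all $e^0_i\in\Gamma(E_0)$.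 *)

(* Defs.v *)
(* Abstract algebraic rendering of an LWX 2-algebroid:
   C^oo(M) is a commutative R-algebra A, sections Gamma(E_{-1}), Gamma(E_0)
   are A-modules E1, E0, and Gamma(calE) = Gamma(E_{-1}) (+) Gamma(E_0) is the
   product E1 * E0 (first component = degree -1 part). *)
From HB Require Import structures.
From mathcomp Require Import all_boot all_order all_algebra.
Set Implicit Arguments. Unset Strict Implicit. Unset Printing Implicit Defensive.
Import Order.TTheory GRing.Theory Num.Theory.
Local Open Scope ring_scope.

Section LWX.
Variables (R : realFieldType) (A : comAlgType R) (E1 E0 : lmodType A).

Definition rsc (V : lmodType A) (r : R) (v : V) : V := (r%:A : A) *: v.

Definition reduced_fun_ring : Prop := forall g : A, g * g = 0 -> g = 0.

Record LWX2 := {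
  dd : E1 -> E0;
  rho : E0 -> A -> A;                  (* anchor: rho e is a vector field acting on C^oo(M) *)
  (* the pairing S restricted to E_0 x E_{-1}; E_0, E_{-1} isotropic *)
  pair : E0 -> E1 -> A;
  (* graded components of the bracket o *)
  c00 : E0 -> E0 -> E0;
  c01 : E0 -> E1 -> E1;
  c10 : E1 -> E0 -> E1;
  Om : E0 -> E0 -> E0 -> E1;
  DD : A -> E1;

  dd_lin : forall (f : A) m n, dd (f *: m + n) = f *: dd m + dd n;
  rho_lin : forall (f : A) x y g, rho (f *: x + y) g = f * rho x g + rho y g;
  rho_add : forall x g h, rho x (g + h) = rho x g + rho x h;
  rho_scale : forall x (r : R) g, rho x (r *: g) = r *: rho x g;
  rho_mul : forall x g h, rho x (g * h) = g * rho x h + h * rho x g;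
  pair_linl : forall (f : A) x y m, pair (f *: x + y) m = f * pair x m + pair y m;
  pair_linr : forall (f : A) x m n, pair x (f *: m + n) = f * pair x m + pair x n;
  c00_linl : forall (r : R) x y z, c00 (rsc r x + y) z = rsc r (c00 x z) + c00 y z;
  c00_linr : forall (r : R) x y z, c00 x (rsc r y + z) = rsc r (c00 x y) + c00 x z;
  c01_linl : forall (r : R) x y m, c01 (rsc r x + y) m = rsc r (c01 x m) + c01 y m;
  c01_linr : forall (r : R) x m n, c01 x (rsc r m + n) = rsc r (c01 x m) + c01 x n;
  c10_linl : forall (r : R) m n x, c10 (rsc r m + n) x = rsc r (c10 m x) + c10 n x;
  c10_linr : forall (r : R) m x y, c10 m (rsc r x + y) = rsc r (c10 m x) + c10 m y;
  c00_skew : forall x y, c00 x y = - c00 y x;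
  Om_lin1 : forall (f : A) x x' y z, Om (f *: x + x') y z = f *: Om x y z + Om x' y z;
  Om_lin2 : forall (f : A) x y y' z, Om x (f *: y + y') z = f *: Om x y z + Om x y' z;
  Om_lin3 : forall (f : A) x y z z', Om x y (f *: z + z') = f *: Om x y z + Om x y z';
  Om_skew12 : forall x y z, Om x y z = - Om y x z;
  Om_skew23 : forall x y z, Om x y z = - Om x z y;
  Om_alt12 : forall x z, Om x x z = 0;
  Om_alt23 : forall x y, Om x y y = 0;
  (* S nondegenerate (given isotropy of E_0, E_{-1}, on both sides) *)
  pair_nondeg0 : forall x, (forall m, pair x m = 0) -> x = 0;
  pair_nondeg1 : forall m, (forall x, pair x m = 0) -> m = 0;
  DD_def : forall f x, pair x (DD f) = rho x f;

  ax_a : forall x m, dd (c01 x m) = c00 x (dd m);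
  ax_b : forall m x, dd (c10 m x) = c00 (dd m) x;
  ax_c : forall m n, c01 (dd m) n = c10 m (dd n);
  ax_d : forall x y z,
    dd (Om x y z) = c00 x (c00 y z) - c00 (c00 x y) z - c00 y (c00 x z);
  ax_e1 : forall x y m,
    Om x y (dd m) = c01 x (c01 y m) - c01 (c00 x y) m - c01 y (c01 x m);
  ax_e2 : forall x y m,
    Om x (dd m) y = c01 x (c10 m y) - c10 (c01 x m) y - c10 m (c00 x y);
  ax_e3 : forall x y m,
    Om (dd m) x y = c10 m (c00 x y) - c10 (c10 m x) y - c01 x (c10 m y);
  ax_f : forall w x y z,
    c01 w (Om x y z) - c01 x (Om w y z) + c01 y (Om w x z) + c10 (Om w x y) z
    - Om (c00 w x) y z - Om x (c00 w y) z - Om x y (c00 w z)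
    + Om w (c00 x y) z + Om w y (c00 x z) - Om w x (c00 y z) = 0
}.

Variable L : LWX2.

Definition secE := (E1 * E0)%type.
Definition inj1 (m : E1) : secE := (m, 0).
Definition inj0 (x : E0) : secE := (0, x).

(* the full symmetric form S on calE (E_0, E_{-1} isotropic) *)
Definition SS (e e' : secE) : A := pair L e.2 e'.1 + pair L e'.2 e.1.
(* the full bracket o on calE (zero on E_{-1} x E_{-1}) *)
Definition circ (e e' : secE) : secE :=
  (c01 L e.2 e'.1 + c10 L e.1 e'.2, c00 L e.2 e'.2).
Definition rhoE (e : secE) : A -> A := rho L e.2.

Definition skb (e e' : secE) : secE := rsc (2^-1) (circ e e' - circ e' e).
Definition Jac (e1 e2 e3 : secE) : secE :=
  skb (skb e1 e2) e3 + skb (skb e2 e3) e1 + skb (skb e3 e1) e2.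
Definition Tfun (x1 x2 : E0) (m : E1) : A :=
  (6^-1 : R)%:A * (SS (inj0 x1) (skb (inj0 x2) (inj1 m))
                 + SS (inj1 m) (skb (inj0 x1) (inj0 x2))
                 + SS (inj0 x2) (skb (inj1 m) (inj0 x1))).

Definition LWX_axioms : Prop :=
  [/\ forall e : secE, circ e e = inj1 (rsc (2^-1) (DD L (SS e e))),
      forall m1 m2 : E1, SS (inj0 (dd L m1)) (inj1 m2) = SS (inj1 m1) (inj0 (dd L m2)),
      forall e1 e2 e3 : secE,
        rhoE e1 (SS e2 e3) = SS (circ e1 e2) e3 + SS e2 (circ e1 e3)
    & forall x1 x2 x3 x4 : E0,
        SS (inj1 (Om L x1 x2 x3)) (inj0 x4) = - SS (inj0 x3) (inj1 (Om L x1 x2 x4))].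

End LWX.
Arguments reduced_fun_ring {R} A.
Arguments inj1 {R A E1 E0} m.
Arguments inj0 {R A E1 E0} x.

(* Main.v *)
Require Import Defs.
From HB Require Import structures.
From mathcomp Require Import all_boot all_order all_algebra ring.
Import Order.TTheory GRing.Theory Num.Theory.
Local Open Scope ring_scope.
Set Implicit Arguments. Unset Strict Implicit.

Lemma morph0 (U W : zmodType) (f : U -> W) :
  (forall u v, f (u + v) = f u + f v) -> f 0 = 0.
Proof. move=> hf; have h := hf 0 0; rewrite addr0 in h.
by apply: (@addrI _ (f 0)); rewrite addr0 -h. Qed.
Lemma morphN (U W : zmodType) (f : U -> W) :
  (forall u v, f (u + v) = f u + f v) -> forall u, f (- u) = - f u.
Proof. move=> hf u; apply: (@addrI _ (f u)); rewrite -hf !subrr; exact: morph0. Qed.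
Lemma morphB (U W : zmodType) (f : U -> W) :
  (forall u v, f (u + v) = f u + f v) -> forall u v, f (u - v) = f u - f v.
Proof. by move=> hf u v; rewrite hf (morphN hf). Qed.

Section P.
Variables (R : realFieldType) (A : comAlgType R) (E1 E0 : lmodType A).
Variable L : LWX2 E1 E0.

Lemma rsc1 (V : lmodType A) (v : V) : rsc 1 v = v.
Proof. by rewrite /rsc scale1r scale1r. Qed.

Lemma ha : ((2^-1 : R)%:A : A) + (2^-1 : R)%:A = 1.
Proof. rewrite -scalerDl. have -> : (2^-1 + 2^-1 : R) = 1 by field.
by rewrite -in_algE rmorph1. Qed.

Lemma s2 : ((6^-1 : R)%:A : A) * 3%:R = (2^-1 : R)%:A.
Proof. rewrite -!in_algE -(rmorph_nat (in_alg A) 3) -rmorphM; congr (in_alg A _).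
by field. Qed.

Lemma s3 : ((6^-1 : R)%:A : A) * (1 + (2^-1 : R)%:A) = (2^-1 : R)%:A * (2^-1 : R)%:A.
Proof. rewrite -!in_algE -(rmorph1 (in_alg A)) -rmorphD -!rmorphM; congr (in_alg A _).
by field. Qed.


Local Notation a := ((2^-1 : R)%:A : A).
Local Notation pr := (pair L).

Lemma c00Dr x y z : c00 L x (y + z) = c00 L x y + c00 L x z.
Proof. by have := c00_linr L 1 x y z; rewrite !rsc1. Qed.
Lemma c00Dl x y z : c00 L (x + y) z = c00 L x z + c00 L y z.
Proof. by have := c00_linl L 1 x y z; rewrite !rsc1. Qed.
Lemma c01Dr x y z : c01 L x (y + z) = c01 L x y + c01 L x z.
Proof. by have := c01_linr L 1 x y z; rewrite !rsc1. Qed.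
Lemma c01Dl x y z : c01 L (x + y) z = c01 L x z + c01 L y z.
Proof. by have := c01_linl L 1 x y z; rewrite !rsc1. Qed.
Lemma c10Dr x y z : c10 L x (y + z) = c10 L x y + c10 L x z.
Proof. by have := c10_linr L 1 x y z; rewrite !rsc1. Qed.
Lemma c10Dl x y z : c10 L (x + y) z = c10 L x z + c10 L y z.
Proof. by have := c10_linl L 1 x y z; rewrite !rsc1. Qed.
Lemma ddD m n : dd L (m + n) = dd L m + dd L n.
Proof. by have := dd_lin L 1 m n; rewrite !scale1r. Qed.
Lemma pairD2 x m n : pr x (m + n) = pr x m + pr x n.
Proof. by have := pair_linr L 1 x m n; rewrite !scale1r !mul1r. Qed.
Lemma pairD1 x y n : pr (x + y) n = pr x n + pr y n.
Proof. by have := pair_linl L 1 x y n; rewrite !scale1r !mul1r. Qed.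
Lemma rhoDv x y g : rho L (x + y) g = rho L x g + rho L y g.
Proof. by have := rho_lin L 1 x y g; rewrite !scale1r !mul1r. Qed.

Lemma c00_0r x : c00 L x 0 = 0. Proof. exact: (morph0 (c00Dr x)). Qed.
Lemma c00_0l x : c00 L 0 x = 0. Proof. exact: (morph0 (fun u v => c00Dl u v x)). Qed.
Lemma c01_0r x : c01 L x 0 = 0. Proof. exact: (morph0 (c01Dr x)). Qed.
Lemma c01_0l x : c01 L 0 x = 0. Proof. exact: (morph0 (fun u v => c01Dl u v x)). Qed.
Lemma c10_0r x : c10 L x 0 = 0. Proof. exact: (morph0 (c10Dr x)). Qed.
Lemma c10_0l x : c10 L 0 x = 0. Proof. exact: (morph0 (fun u v => c10Dl u v x)). Qed.
Lemma pair0r x : pr x 0 = 0. Proof. exact: (morph0 (pairD2 x)). Qed.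
Lemma pair0l n : pr 0 n = 0. Proof. exact: (morph0 (fun u v => pairD1 u v n)). Qed.
Lemma rho0v g : rho L 0 g = 0. Proof. exact: (morph0 (fun u v => rhoDv u v g)). Qed.
Lemma rho0f x : rho L x 0 = 0. Proof. exact: (morph0 (rho_add L x)). Qed.

Lemma c00Nr x y : c00 L x (- y) = - c00 L x y. Proof. exact: (morphN (c00Dr x)). Qed.
Lemma c00Nl x y : c00 L (- x) y = - c00 L x y. Proof. exact: (morphN (fun u v => c00Dl u v y)). Qed.
Lemma c01Nr x y : c01 L x (- y) = - c01 L x y. Proof. exact: (morphN (c01Dr x)). Qed.
Lemma c01Nl x y : c01 L (- x) y = - c01 L x y. Proof. exact: (morphN (fun u v => c01Dl u v y)). Qed.
Lemma c10Nr x y : c10 L x (- y) = - c10 L x y. Proof. exact: (morphN (c10Dr x)). Qed.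
Lemma c10Nl x y : c10 L (- x) y = - c10 L x y. Proof. exact: (morphN (fun u v => c10Dl u v y)). Qed.
Lemma ddN m : dd L (- m) = - dd L m. Proof. exact: (morphN ddD). Qed.
Lemma pairN2 x m : pr x (- m) = - pr x m. Proof. exact: (morphN (pairD2 x)). Qed.
Lemma pairN1 x m : pr (- x) m = - pr x m. Proof. exact: (morphN (fun u v => pairD1 u v m)). Qed.
Lemma rhoNv x g : rho L (- x) g = - rho L x g. Proof. exact: (morphN (fun u v => rhoDv u v g)). Qed.
Lemma rhoNf x g : rho L x (- g) = - rho L x g. Proof. exact: (morphN (rho_add L x)). Qed.

Lemma c01Zr r x m : c01 L x ((r%:A : A) *: m) = (r%:A : A) *: c01 L x m.
Proof. by have := c01_linr L r x m 0; rewrite !addr0 c01_0r addr0. Qed.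
Lemma c01Zl r x m : c01 L ((r%:A : A) *: x) m = (r%:A : A) *: c01 L x m.
Proof. by have := c01_linl L r x 0 m; rewrite !addr0 c01_0l addr0. Qed.
Lemma c10Zr r x m : c10 L m ((r%:A : A) *: x) = (r%:A : A) *: c10 L m x.
Proof. by have := c10_linr L r m x 0; rewrite !addr0 c10_0r addr0. Qed.
Lemma c10Zl r x m : c10 L ((r%:A : A) *: m) x = (r%:A : A) *: c10 L m x.
Proof. by have := c10_linl L r m 0 x; rewrite !addr0 c10_0l addr0. Qed.
Lemma pairZ2 f x m : pr x (f *: m) = f * pr x m.
Proof. by have := pair_linr L f x m 0; rewrite !addr0 pair0r addr0. Qed.
Lemma pairZ1 f x m : pr (f *: x) m = f * pr x m.
Proof. by have := pair_linl L f x 0 m; rewrite !addr0 pair0l addr0. Qed.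
Lemma rho1 x : rho L x 1 = 0.
Proof. have h := rho_mul L x 1 1; rewrite mul1r mul1r in h.
by apply: (@addrI _ (rho L x 1)); rewrite addr0 -h. Qed.
Lemma rhoC x r : rho L x (r%:A) = 0.
Proof. by rewrite rho_scale rho1 scaler0. Qed.
Lemma rhoCM x r g : rho L x ((r%:A : A) * g) = r%:A * rho L x g.
Proof. by rewrite rho_mul rhoC mulr0 addr0. Qed.
Lemma rhoZv f x g : rho L (f *: x) g = f * rho L x g.
Proof. by have := rho_lin L f x 0 g; rewrite addr0 rho0v addr0. Qed.

Lemma eqE1 (u v : E1) : (forall z, pr z u = pr z v) -> u = v.
Proof. move=> h; apply/eqP; rewrite -subr_eq0; apply/eqP; apply: (@pair_nondeg1 _ _ _ _ L) => z.
by rewrite pairD2 pairN2 h subrr. Qed.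
Lemma eqE0 (u v : E0) : (forall n, pr u n = pr v n) -> u = v.
Proof. move=> h; apply/eqP; rewrite -subr_eq0; apply/eqP; apply: (@pair_nondeg0 _ _ _ _ L) => n.
by rewrite pairD1 pairN1 h subrr. Qed.

Lemma DDD f g : DD L (f + g) = DD L f + DD L g.
Proof. apply: eqE1 => z; by rewrite pairD2 !DD_def rho_add. Qed.
Lemma DDCM r f : DD L ((r%:A : A) * f) = (r%:A : A) *: DD L f.
Proof. apply: eqE1 => z; by rewrite pairZ2 !DD_def rhoCM. Qed.

Lemma halfvv (V : lmodType A) (v : V) : a *: (v + v) = v.
Proof. by rewrite scalerDr -scalerDl ha scale1r. Qed.


Lemma eq0_tr (u v : A) : v = 0 -> u = v -> u = 0.
Proof. by move=> -> . Qed.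

Hypothesis HL : LWX_axioms L.

Lemma c10E n u : c10 L n u = DD L (pr u n) - c01 L u n.
Proof. case: HL => hii _ _ _; have := f_equal fst (hii (n, u)).
rewrite /circ /SS /inj1 /rsc /= DDD halfvv => <-.
by rewrite addrAC subrr add0r. Qed.

Lemma iv0 x z n : rho L x (pr z n) = pr (c00 L x z) n + pr z (c01 L x n).
Proof. case: HL => _ _ hiv _; have := hiv (inj0 x) (inj0 z) (inj1 n).
by rewrite /circ /SS /rhoE /inj0 /inj1 /= !c01_0r !c10_0l !c00_0r !pair0r !pair0l !addr0. Qed.

Lemma pair_c01 z x n : pr z (c01 L x n) = rho L x (pr z n) - pr (c00 L x z) n.
Proof. by rewrite iv0 [pr (c00 L x z) n + _]addrC addrK. Qed.

Lemma pair_c10 z n u : pr z (c10 L n u) = rho L z (pr u n) - pr z (c01 L u n).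
Proof. by rewrite c10E pairD2 pairN2 DD_def. Qed.

Lemma iii' m1 m2 : pr (dd L m1) m2 = pr (dd L m2) m1.
Proof. case: HL => _ hiii _ _; have := hiii m1 m2.
by rewrite /SS /inj0 /inj1 /= !pair0l add0r addr0. Qed.

Lemma v' x1 x2 x3 x4 : pr x4 (Om L x1 x2 x3) = - pr x3 (Om L x1 x2 x4).
Proof. case: HL => _ _ _ hv; have := hv x1 x2 x3 x4.
by rewrite /SS /inj0 /inj1 /= !pair0l add0r addr0. Qed.

Lemma Kpair x y w n :
  rho L x (rho L y (pr w n)) - rho L y (rho L x (pr w n)) - rho L (c00 L x y) (pr w n) = 0.
Proof.
have hO : pr (dd L (Om L x y w)) n + pr w (Om L x y (dd L n)) = 0.
  by rewrite iii' v' addNr.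
rewrite ax_d ax_e1 in hO.
rewrite ?(pairD1, pairN1, pairD2, pairN2) in hO.
apply: (eq0_tr hO).
rewrite !iv0 !rho_add !iv0.
ring.
Qed.

Lemma c01DD z x f : pr z (c01 L x (DD L f)) = rho L x (rho L z f) - rho L (c00 L x z) f.
Proof. by rewrite pair_c01 !DD_def. Qed.

Lemma ddDD u n : dd L (DD L (pr u n)) = 0.
Proof. have -> : DD L (pr u n) = c01 L u n + c10 L n u by rewrite c10E addrC subrK.
by rewrite ddD ax_a ax_b (c00_skew L (dd L n)) subrr. Qed.

Lemma rho_dd m u n : rho L (dd L m) (pr u n) = 0.
Proof. by rewrite -DD_def iii' ddDD pair0l. Qed.

Lemma Blem u n : a *: (c01 L u n - c10 L n u) = c01 L u n - a *: DD L (pr u n).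
Proof. by rewrite c10E opprB addrA scalerBr halfvv. Qed.

Lemma Blem' u n : a *: (c10 L n u - c01 L u n) = a *: DD L (pr u n) - c01 L u n.
Proof. by rewrite -opprB scalerN Blem opprB. Qed.

Lemma half_skew x y : a *: (c00 L x y - c00 L y x) = c00 L x y.
Proof. by rewrite (c00_skew L y x) opprK halfvv. Qed.

Lemma Tform x y m : Tfun L x y m =
  a * (pr (c00 L x y) m + a * (rho L y (pr x m) - rho L x (pr y m))).
Proof.
rewrite /Tfun /SS /skb /circ /inj0 /inj1 /rsc /=.
rewrite ?(c00_0r, c00_0l, c01_0r, c01_0l, c10_0r, c10_0l, addr0, add0r, subr0, sub0r, scaler0, pair0l, pair0r, oppr0).
rewrite Blem Blem' half_skew.
rewrite ?(pairD2, pairN2, pairZ2, pair_c01, DD_def).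
rewrite (c00_skew L y x) pairN1.
set X := pr (c00 L x y) m. set Y := rho L y (pr x m) - rho L x (pr y m).
transitivity (((6^-1 : R)%:A * 3%:R) * X + ((6^-1 : R)%:A * (1 + a)) * Y).
  rewrite /X /Y; ring.
rewrite s2 s3; ring.
Qed.

Lemma prodE (p q : E1 * E0) : p.1 = q.1 -> p.2 = q.2 -> p = q.
Proof. by case: p; case: q => ? ? ? ? /= -> ->. Qed.

Lemma part1 x1 x2 x3 :
  Jac L (inj0 x1) (inj0 x2) (inj0 x3) = - inj0 (dd L (Om L x1 x2 x3)).
Proof.
rewrite /Jac /skb /circ /inj0 /inj1 /rsc /=.
rewrite ?(c00_0r, c00_0l, c01_0r, c01_0l, c10_0r, c10_0l, addr0, add0r, subr0, sub0r, scaler0, oppr0, half_skew).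
apply: prodE => /=.
  by rewrite ?(addr0, subr0, scaler0, oppr0).
rewrite !half_skew ax_d (c00_skew L x1 (c00 L x2 x3)) (c00_skew L x2 (c00 L x1 x3)) (c00_skew L x3 x1) c00Nl.
apply: eqE0 => n.
rewrite ?(pairD1, pairN1).
ring.
Qed.

Lemma Kswap u v w n : rho L u (rho L v (pr w n)) =
  rho L v (rho L u (pr w n)) - rho L (c00 L v u) (pr w n).
Proof. have h := Kpair v u w n. apply/eqP; rewrite -subr_eq0; apply/eqP.
by rewrite -oppr0 -h; ring. Qed.

Lemma part2 x y m :
  Jac L (inj0 x) (inj0 y) (inj1 m)
       = inj1 (DD L (Tfun L x y m)) - inj1 (Om L x y (dd L m)).
Proof.
rewrite Tform /Jac /skb /circ /inj0 /inj1 /rsc /=.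
rewrite ?(c00_0r, c00_0l, c01_0r, c01_0l, c10_0r, c10_0l, addr0, add0r, subr0, sub0r, scaler0, oppr0, half_skew).
rewrite ?(Blem, Blem').
apply: prodE => /=; last by rewrite ?(addr0, subr0, scaler0, oppr0).
rewrite ?(Blem, Blem') ax_e1.
apply: eqE1 => z.
rewrite ?(pairD2, pairN2, pairZ2, pair_c01, DD_def, rho_add, rhoNf, rhoCM).
rewrite ?(pairN1, rhoNf, rhoNv).
rewrite ?(Kswap z x, Kswap z y).
rewrite (c00_skew L y x) pairN1 rhoNf. ring.
Qed.

Lemma part3 x m1 m2 : Tfun L (dd L m1) x m2 = - Tfun L (dd L m2) x m1.
Proof.
rewrite !Tform !rho_dd.
have E : forall p q, pr (c00 L (dd L p) x) q
    = - rho L x (pr (dd L q) p) - pr (c00 L (dd L q) x) p.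
  move=> p q; rewrite -ax_b iii' pair_c10 rho_dd pair_c01 (c00_skew L x) pairN1.
  ring.
rewrite (E m1 m2) (iii' m1 m2).
set s := rho L x (pr (dd L m2) m1).
have hs : s = a * s + a * s by rewrite -mulrDl ha mul1r.
rewrite {1}hs; ring.
Qed.
End P.

Unset Implicit Arguments. Set Strict Implicit.

Theorem mainTheorem4 (R : realFieldType) (A : comAlgType R) (E1 E0 : lmodType A)
  (HA : reduced_fun_ring A) (L : LWX2 E1 E0) (HL : LWX_axioms L) :
  (forall x1 x2 x3 : E0,
     Jac L (inj0 x1) (inj0 x2) (inj0 x3) = - inj0 (dd L (Om L x1 x2 x3))) /\
  (forall (x1 x2 : E0) (m : E1),
     Jac L (inj0 x1) (inj0 x2) (inj1 m)
       = inj1 (DD L (Tfun L x1 x2 m)) - inj1 (Om L x1 x2 (dd L m))) /\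
  (forall (x : E0) (m1 m2 : E1),
     Tfun L (dd L m1) x m2 = - Tfun L (dd L m2) x m1).
Proof.
split; first exact: part1.
split; first exact: part2.
exact: part3.
Qed.
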